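(* Let $V$ be a commutative unital quantale whose underlying lattice is a frame. Every regular epimorphism in $\mathsf{VGrp}$ is both open and proper.
   Context: A commutative unital quantale $V$ is a complete lattice with a commutative associative operation $\otimes$ with unit $k$ preserving arbitrary joins in each variable; standing assumption: as a lattice $V$ is a frame. A $V$-category $(X,a)$: $a\colon X\times X\to V$ with $k\le a(x,x)$ and $a(x,x')\otimes a(x',x'')\le a(x,x'')$. A $V$-group $(X,a,+)$ is a $V$-category with a group structure (additive, not necessarily abelian) such that $a(x_1,x_2)\otimes a(x_1',x_2')\le a(x_1+x_1',x_2+x_2')$; $V$-homomorphisms are group homomorphisms $f$ with $a(x,x')\le b(f(x),f(x'))$; category $\mathsf{VGrp}$. A $V$-functor $f\colon(X,a)\to(Y,b)$ is proper if $b(f(x),y)=\bigvee\{a(x,x')\mid f(x')=y\}$ for all $x\in X$, $y\in Y$, and open if $b(y,f(x))=\bigvee\{a(x',x)\mid f(x')=y\}$ for all $x\in X$, $y\in Y$ (empty joins being $\bot$). *)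

(* Defs.v *)
Set Implicit Arguments.

Record Quantale := {
  qcar :> Type;
  qle : qcar -> qcar -> Prop;
  qle_refl : forall x, qle x x;
  qle_trans : forall x y z, qle x y -> qle y z -> qle x z;
  qle_antisym : forall x y, qle x y -> qle y x -> x = y;
  qjoin : (qcar -> Prop) -> qcar;
  qjoin_ub : forall (S : qcar -> Prop) x, S x -> qle x (qjoin S);
  qjoin_lub : forall (S : qcar -> Prop) y, (forall x, S x -> qle x y) -> qle (qjoin S) y;
  qtens : qcar -> qcar -> qcar;
  qk : qcar;
  qtens_comm : forall x y, qtens x y = qtens y x;
  qtens_assoc : forall x y z, qtens x (qtens y z) = qtens (qtens x y) z;
  qtens_k_l : forall x, qtens qk x = x;
  qtens_k_r : forall x, qtens x qk = x;
  qtens_join_l : forall (S : qcar -> Prop) a,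
      qtens (qjoin S) a = qjoin (fun y => exists x, S x /\ y = qtens x a);
  qtens_join_r : forall a (S : qcar -> Prop),
      qtens a (qjoin S) = qjoin (fun y => exists x, S x /\ y = qtens a x)
}.

Definition qmeet (V : Quantale) (a b : V) : V :=
  qjoin V (fun c => qle V c a /\ qle V c b).

Definition is_frame (V : Quantale) : Prop :=
  forall (a : V) (S : V -> Prop),
    qmeet V a (qjoin V S) = qjoin V (fun y => exists x, S x /\ y = qmeet V a x).

Record VGroup (V : Quantale) := {
  vg_car :> Type;
  vg_a : vg_car -> vg_car -> V;
  vg_add : vg_car -> vg_car -> vg_car;
  vg_zero : vg_car;
  vg_opp : vg_car -> vg_car;
  vg_addA : forall x y z, vg_add x (vg_add y z) = vg_add (vg_add x y) z;
  vg_add0l : forall x, vg_add vg_zero x = x;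
  vg_add0r : forall x, vg_add x vg_zero = x;
  vg_addNl : forall x, vg_add (vg_opp x) x = vg_zero;
  vg_addNr : forall x, vg_add x (vg_opp x) = vg_zero;
  vg_refl : forall x, qle V (qk V) (vg_a x x);
  vg_trans : forall x y z, qle V (qtens V (vg_a x y) (vg_a y z)) (vg_a x z);
  vg_compat : forall x1 x2 y1 y2,
      qle V (qtens V (vg_a x1 x2) (vg_a y1 y2)) (vg_a (vg_add x1 y1) (vg_add x2 y2))
}.

Definition is_VHom (V : Quantale) (X Y : VGroup V) (f : X -> Y) : Prop :=
  (forall x y, f (vg_add X x y) = vg_add Y (f x) (f y)) /\
  (forall x x', qle V (vg_a X x x') (vg_a Y (f x) (f x'))).

Arguments is_VHom {V X Y} f.

Definition regular_epi (V : Quantale) (X Y : VGroup V) (f : X -> Y) : Prop :=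
  is_VHom f /\
  exists (Z : VGroup V) (g h : Z -> X),
    is_VHom g /\ is_VHom h /\ (forall z, f (g z) = f (h z)) /\
    forall (W : VGroup V) (k : X -> W),
      is_VHom k -> (forall z, k (g z) = k (h z)) ->
      exists u : Y -> W,
        is_VHom u /\ (forall x, u (f x) = k x) /\
        forall u' : Y -> W, is_VHom u' -> (forall x, u' (f x) = k x) ->
          forall y, u' y = u y.

Arguments regular_epi {V X Y} f.

Definition is_proper (V : Quantale) (X Y : VGroup V) (f : X -> Y) : Prop :=
  forall (x : X) (y : Y),
    vg_a Y (f x) y = qjoin V (fun v => exists x', f x' = y /\ v = vg_a X x x').

Definition is_open (V : Quantale) (X Y : VGroup V) (f : X -> Y) : Prop :=
  forall (x : X) (y : Y),
    vg_a Y y (f x) = qjoin V (fun v => exists x', f x' = y /\ v = vg_a X x' x).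

Arguments is_proper {V X Y} f.
Arguments is_open {V X Y} f.

(* Main.v *)
Require Import Defs.
From Stdlib Require Import ProofIrrelevance Setoid.

Lemma qtens_mono_l (V : Quantale) (a b c : V) :
  qle V a b -> qle V (qtens V a c) (qtens V b c).
Proof.
  intros H.
  assert (E : qjoin V (fun z => z = a \/ z = b) = b).
  { apply qle_antisym.
    - apply qjoin_lub. intros x [-> | ->]; [exact H | apply qle_refl].
    - apply qjoin_ub. right; reflexivity. }
  rewrite <- E. rewrite qtens_join_l. apply qjoin_ub.
  exists a. split; [left; reflexivity | reflexivity].
Qed.

Lemma qtens_mono (V : Quantale) (a b c d : V) :
  qle V a b -> qle V c d -> qle V (qtens V a c) (qtens V b d).
Proof.
  intros H1 H2. apply qle_trans with (qtens V b c).
  - apply qtens_mono_l; exact H1.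
  - rewrite (qtens_comm V b c), (qtens_comm V b d). apply qtens_mono_l; exact H2.
Qed.

Lemma le_ktens (V : Quantale) (X : VGroup V) (v : V) (n : X) :
  qle V v (qtens V v (vg_a X n n)).
Proof.
  rewrite <- (qtens_k_r V v) at 1. apply qtens_mono; [apply qle_refl | apply vg_refl].
Qed.

Lemma hom_zero (V : Quantale) (X Y : VGroup V) (f : X -> Y) :
  (forall x y, f (vg_add X x y) = vg_add Y (f x) (f y)) -> f (vg_zero X) = vg_zero Y.
Proof.
  intros Hf.
  assert (H : f (vg_zero X) = vg_add Y (f (vg_zero X)) (f (vg_zero X))).
  { rewrite <- Hf, vg_add0l. reflexivity. }
  transitivity (vg_add Y (vg_opp Y (f (vg_zero X))) (f (vg_zero X))); [| apply vg_addNl].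
  rewrite H at 3. rewrite vg_addA, vg_addNl, vg_add0l. reflexivity.
Qed.

Lemma hom_opp (V : Quantale) (X Y : VGroup V) (f : X -> Y) :
  (forall x y, f (vg_add X x y) = vg_add Y (f x) (f y)) ->
  forall x, f (vg_opp X x) = vg_opp Y (f x).
Proof.
  intros Hf x.
  rewrite <- (vg_add0r Y (f (vg_opp X x))).
  rewrite <- (vg_addNr Y (f x)), vg_addA, <- Hf, vg_addNl, (hom_zero _ _ _ _ Hf), vg_add0l.
  reflexivity.
Qed.

Definition Qd (V : Quantale) (X Y : VGroup V) (f : X -> Y) (y y' : Y) : V :=
  qjoin V (fun v => exists x x', f x = y /\ f x' = y' /\ v = vg_a X x x').

Definition Img (V : Quantale) (X Y : VGroup V) (f : X -> Y) :=
  { y : Y | exists x, f x = y }.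

Lemma sig_eq' (A : Type) (P : A -> Prop) (w w' : {a : A | P a}) :
  proj1_sig w = proj1_sig w' -> w = w'.
Proof.
  destruct w as [a p], w' as [a' p']; simpl; intros ->.
  rewrite (proof_irrelevance _ p p'). reflexivity.
Qed.

Section W.
Context (V : Quantale) (X Y : VGroup V) (f : X -> Y)
  (Hf : forall x y, f (vg_add X x y) = vg_add Y (f x) (f y)).

Definition Wt := Img V X Y f.
Definition Wa (w w' : Wt) : V := Qd V X Y f (proj1_sig w) (proj1_sig w').

Definition Wadd (w w' : Wt) : Wt.
Proof.
  exists (vg_add Y (proj1_sig w) (proj1_sig w')).
  destruct w as [y [x Hx]], w' as [y' [x' Hx']]; simpl.
  exists (vg_add X x x'). rewrite Hf, Hx, Hx'. reflexivity.
Defined.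

Definition Wzero : Wt.
Proof. exists (vg_zero Y). exists (vg_zero X). apply hom_zero; exact Hf. Defined.

Definition Wopp (w : Wt) : Wt.
Proof.
  exists (vg_opp Y (proj1_sig w)).
  destruct w as [y [x Hx]]; simpl. exists (vg_opp X x).
  rewrite (hom_opp _ _ _ _ Hf), Hx. reflexivity.
Defined.

Lemma Qd_in (x x' : X) : qle V (vg_a X x x') (Qd V X Y f (f x) (f x')).
Proof. apply qjoin_ub. exists x, x'. auto. Qed.

Lemma Wrefl (w : Wt) : qle V (qk V) (Wa w w).
Proof.
  destruct w as [y [x Hx]]; unfold Wa; simpl. subst y.
  eapply qle_trans; [apply vg_refl | apply Qd_in].
Qed.

Lemma Wtrans (w1 w2 w3 : Wt) : qle V (qtens V (Wa w1 w2) (Wa w2 w3)) (Wa w1 w3).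
Proof.
  unfold Wa, Qd. rewrite qtens_join_l. apply qjoin_lub.
  intros v [s [[x1 [x2 [H1 [H2 ->]]]] ->]].
  rewrite qtens_join_r. apply qjoin_lub.
  intros v [t [[x3 [x4 [H3 [H4 ->]]]] ->]].
  set (n := vg_add X (vg_opp X x2) x3).
  apply qle_trans with (qtens V (qtens V (vg_a X x1 x2) (vg_a X n n)) (vg_a X x3 x4)).
  { apply qtens_mono; [apply le_ktens | apply qle_refl]. }
  apply qle_trans with (qtens V (vg_a X (vg_add X x1 n) x3) (vg_a X x3 x4)).
  { apply qtens_mono; [| apply qle_refl].
    replace (vg_a X (vg_add X x1 n) x3) with (vg_a X (vg_add X x1 n) (vg_add X x2 n)).
    - apply vg_compat.
    - unfold n. rewrite (vg_addA X x2), vg_addNr, vg_add0l. reflexivity. }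
  eapply qle_trans; [apply vg_trans |].
  apply qjoin_ub. exists (vg_add X x1 n), x4. split; [| split; auto].
  unfold n. rewrite !Hf, (hom_opp _ _ _ _ Hf), H2, <- H3, vg_addNl, vg_add0r.
  exact H1.
Qed.

Lemma Wcompat (w1 w2 w3 w4 : Wt) :
  qle V (qtens V (Wa w1 w2) (Wa w3 w4)) (Wa (Wadd w1 w3) (Wadd w2 w4)).
Proof.
  destruct w1 as [y1 p1], w2 as [y2 p2], w3 as [y3 p3], w4 as [y4 p4].
  unfold Wa, Qd; simpl. rewrite qtens_join_l. apply qjoin_lub.
  intros v [s [[x1 [x2 [H1 [H2 ->]]]] ->]].
  rewrite qtens_join_r. apply qjoin_lub.
  intros v [t [[x3 [x4 [H3 [H4 ->]]]] ->]].
  eapply qle_trans; [apply vg_compat |].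
  apply qjoin_ub. exists (vg_add X x1 x3), (vg_add X x2 x4).
  rewrite !Hf, H1, H2, H3, H4. auto.
Qed.

Definition WG : VGroup V.
Proof.
  refine {| vg_car := Wt; vg_a := Wa; vg_add := Wadd; vg_zero := Wzero; vg_opp := Wopp;
            vg_refl := Wrefl; vg_trans := Wtrans; vg_compat := Wcompat |};
  intros; apply sig_eq'; simpl.
  - apply vg_addA.
  - apply vg_add0l.
  - apply vg_add0r.
  - apply vg_addNl.
  - apply vg_addNr.
Defined.

End W.

Lemma Qd_le (V : Quantale) (X Y : VGroup V) (f : X -> Y)
  (Hfle : forall x x', qle V (vg_a X x x') (vg_a Y (f x) (f x'))) (y y' : Y) :
  qle V (Qd V X Y f y y') (vg_a Y y y').
Proof.
  apply qjoin_lub. intros v [x [x' [H1 [H2 ->]]]]. subst. apply Hfle.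
Qed.

Theorem theorem5p8 (V : Quantale) (HV : is_frame V)
  (X Y : VGroup V) (f : X -> Y) :
  regular_epi f -> is_open f /\ is_proper f.
Proof.
  intros [[Hfadd Hfle] [Z [g [h [Hg [Hh [Hgh Hcoeq]]]]]]].
  set (W := WG V X Y f Hfadd).
  set (k := (fun x => exist _ (f x) (ex_intro _ x eq_refl)) : X -> W).
  assert (Hk : is_VHom k).
  { split.
    - intros x y. apply sig_eq'. simpl. apply Hfadd.
    - intros x x'. simpl. unfold Wa. simpl. apply Qd_in. }
  destruct (Hcoeq W k Hk (fun z => sig_eq' _ _ (k (g z)) (k (h z)) (Hgh z)))
    as [u [[Huadd Hule] [Huf _]]].
  destruct (Hcoeq Y f (conj Hfadd Hfle) Hgh) as [u0 [_ [_ Huniq]]].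
  assert (Hid : forall y, proj1_sig (u y) = y).
  { intro y.
    rewrite (Huniq (fun y => proj1_sig (u y))).
    - symmetry. apply (Huniq (fun y => y)); [split; intros; auto; apply qle_refl | auto].
    - split.
      + intros y1 y2. rewrite Huadd. reflexivity.
      + intros y1 y2. eapply qle_trans; [apply Hule |]. simpl. unfold Wa.
        apply Qd_le; exact Hfle.
    - intro x. rewrite Huf. reflexivity. }
  assert (Hb : forall y y', qle V (vg_a Y y y') (Qd V X Y f y y')).
  { intros y y'. eapply qle_trans; [apply Hule |]. simpl. unfold Wa.
    rewrite !Hid. apply qle_refl. }
  split.
  - intros x y. apply qle_antisym.
    + eapply qle_trans; [apply Hb |]. apply qjoin_lub.
      intros v [x1 [x2 [H1 [H2 ->]]]].
      set (m := vg_add X (vg_opp X x2) x).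
      eapply qle_trans; [apply (le_ktens V X _ m) |].
      eapply qle_trans; [apply vg_compat |].
      replace (vg_add X x2 m) with x.
      * apply qjoin_ub. exists (vg_add X x1 m). split; [| reflexivity].
        unfold m. rewrite !Hfadd, (hom_opp _ _ _ _ Hfadd), H2, vg_addNl, vg_add0r.
        exact H1.
      * unfold m. rewrite vg_addA, vg_addNr, vg_add0l. reflexivity.
    + apply qjoin_lub. intros v [x' [H1 ->]]. subst y. apply Hfle.
  - intros x y. apply qle_antisym.
    + eapply qle_trans; [apply Hb |]. apply qjoin_lub.
      intros v [x1 [x2 [H1 [H2 ->]]]].
      set (m := vg_add X x (vg_opp X x1)).
      eapply qle_trans; [apply (le_ktens V X _ m) |].
      rewrite qtens_comm.
      eapply qle_trans; [apply vg_compat |].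
      replace (vg_add X m x1) with x.
      * apply qjoin_ub. exists (vg_add X m x2). split; [| reflexivity].
        unfold m. rewrite !Hfadd, (hom_opp _ _ _ _ Hfadd), H1, vg_addNr, vg_add0l.
        exact H2.
      * unfold m. rewrite <- vg_addA, vg_addNl, vg_add0r. reflexivity.
    + apply qjoin_lub. intros v [x' [H1 ->]]. subst y. apply Hfle.
Qed.
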